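(* Let $n$ be a positive integer, $k\ge2$ an integer, and $\beta$ an integer with $0\le\beta\le k-1$. Then $$\det_{0\le i,j\le n-1}\bigl(C_{(k-1)i+j+\beta,k}+C_{(k-1)i+j+\beta+1,k}\bigr)=\sum_{s=0}^{n}\binom{\lfloor\frac{s+\beta}{k-1}\rfloor+n}{n-s}.$$
   Context: For integers $k\ge2$ and $m\ge0$, the generalised Catalan number is $$C_{m,k}=\frac{m-(k-1)\lfloor\frac{m}{k-1}\rfloor+1}{m+\lfloor\frac{m}{k-1}\rfloor+1}\binom{m+\lfloor\frac{m}{k-1}\rfloor+1}{m+1}.$$ *)

(* Defs.v *)
From mathcomp Require Import all_boot all_order all_algebra.
Set Implicit Arguments. Unset Strict Implicit. Unset Printing Implicit Defensive.
Import Order.TTheory GRing.Theory Num.Theory.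
Local Open Scope ring_scope.

Definition genCat (m k : nat) : rat :=
  let q := (m %/ (k.-1))%N in
  ((m - k.-1 * q).+1)%:R / ((m + q).+1)%:R * ('C((m + q).+1, m.+1))%:R.

(* Main.v *)
Require Import Defs.
From mathcomp Require Import all_boot all_order all_algebra.
From mathcomp Require Import ring lra zify.
Import Order.TTheory GRing.Theory Num.Theory.
Local Open Scope ring_scope.

Lemma natS' n : (n.+1)%:R = n%:R + 1 :> rat.
Proof. by rewrite -addn1 natrD. Qed.

Definition Rf (k j s : nat) : rat := s%:R / (k*j+s)%:R * ('C(k*j+s, j))%:R.

Lemma R1 k j s : (0 < k)%N -> (0 < s)%N ->
  Rf k j (s+k) = Rf k j.+1 s.+1 - Rf k j.+1 s.
Proof.
move=> k0 s0; rewrite /Rf.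
set N := (k * j.+1 + s)%N.
have E1 : (k * j + (s + k) = N)%N by rewrite /N mulnS; nia.
have E2 : (k * j.+1 + s.+1 = N.+1)%N by rewrite /N; lia.
rewrite E1 E2.
have B1 : ('C(N.+1, j.+1) * j.+1 = N.+1 * 'C(N, j))%N.
  by rewrite mulnC -mul_bin_diag.
have B2 : ('C(N, j.+1) * j.+1 = (N - j) * 'C(N, j))%N.
  by rewrite mulnC mul_bin_left.
have jN : (j <= N)%N by rewrite /N mulnS; nia.
have H1 : ('C(N.+1, j.+1))%:R = (N.+1)%:R * ('C(N, j))%:R / (j.+1)%:R :> rat.
  by rewrite -natrM -B1 natrM mulfK // pnatr_eq0.
have H2 : ('C(N, j.+1))%:R = (N%:R - j%:R) * ('C(N, j))%:R / (j.+1)%:R :> rat.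
  by rewrite -natrB // -natrM -B2 natrM mulfK // pnatr_eq0.
rewrite H1 H2.
have NE : (N%:R : rat) = k%:R * (j%:R + 1) + s%:R by rewrite /N natrD natrM natS'.
have N0 : (N%:R : rat) != 0 by rewrite pnatr_eq0 /N; lia.
have N1 : ((N.+1)%:R : rat) != 0 by rewrite pnatr_eq0.
have J1 : ((j.+1)%:R : rat) != 0 by rewrite pnatr_eq0.
rewrite !natS' in N1 J1 *.
rewrite natrD.
move: N0 N1 J1; rewrite NE => N0 N1 J1.
clearbody N. field. by rewrite N0 N1 J1.
Qed.

Definition Tg (k n i b : nat) : rat :=
  if (i < n)%N then 0 else (-1)^+n * Rf k (i - n) (k*n+b+1).

Lemma Rf0 k s : (0 < s)%N -> Rf k 0 s = 1.
Proof.
move=> s0; rewrite /Rf muln0 add0n bin0 mulr1 divff //.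
by rewrite pnatr_eq0 -lt0n.
Qed.

Lemma Tg_lo k n i b : (0 < k)%N -> Tg k n.+1 i b = Tg k n i b - Tg k n i b.+1.
Proof.
move=> k0; rewrite /Tg.
case: (ltngtP i n) => [lt|gt|->].
- by rewrite ltnS ltnW // subrr.
- have [j ->] : exists j, i = (n.+1 + j)%N by exists (i - n.+1)%N; lia.
  rewrite !ifF; try (apply/negbTE; rewrite -leqNgt; lia).
  have -> : (n.+1 + j - n.+1 = j)%N by lia.
  have -> : (n.+1 + j - n = j.+1)%N by lia.
  have -> : (k * n.+1 + b + 1 = (k * n + b + 1) + k)%N by rewrite mulnS; lia.
  rewrite R1 //; last by lia.
  have -> : (k * n + b.+1 + 1 = (k * n + b + 1).+1)%N by lia.
  rewrite exprS mulN1r. ring.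
- rewrite ltnSn !subnn !Rf0 ?mulr1 ?subrr //; lia.
Qed.

Lemma Tg_hi k n i : (0 < k)%N ->
  Tg k n.+1 i (k-1) = Tg k n.+1 i.+1 0 + Tg k n i (k-1).
Proof.
move=> k0; rewrite /Tg.
case: (ltngtP i n) => [lt|gt|->].
- by rewrite ltnS ltnW // ltnS lt addr0.
- have [j ->] : exists j, i = (n.+1 + j)%N by exists (i - n.+1)%N; lia.
  rewrite !ifF; try (apply/negbTE; rewrite -leqNgt; lia).
  have -> : (n.+1 + j - n.+1 = j)%N by lia.
  have -> : ((n.+1 + j).+1 - n.+1 = j.+1)%N by lia.
  have -> : (n.+1 + j - n = j.+1)%N by lia.
  have -> : (k * n.+1 + (k - 1) + 1 = (k * n.+1) + k)%N by lia.
  rewrite R1 //; last by rewrite mulnS; lia.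
  have -> : (k * n + (k - 1) + 1 = k * n.+1)%N by rewrite mulnS; lia.
  have -> : (k * n.+1 + 0 + 1 = (k * n.+1).+1)%N by lia.
  by rewrite exprS mulN1r; ring.
- rewrite ltnSn ltnn !subnn !Rf0; try lia.
  rewrite exprS; ring.
Qed.

Lemma genCat_base k i b : (1 < k)%N -> (b <= k - 1)%N ->
  genCat ((k-1)*i + 0 + b) k = Rf k i (b+1).
Proof.
move=> k1 bk; rewrite /genCat /Rf -subn1.
have ki : ((k-1)*i + i = k*i)%N by rewrite mulnBl mul1n subnK // leq_pmull //; lia.
case: (ltngtP b (k-1)) bk => // [blt|beq] _.
- have -> : (((k - 1) * i + 0 + b) %/ (k - 1) = i)%N.
    by rewrite addn0 mulnC divnMDl ?divn_small ?addn0 //; lia.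
  have -> : ((k - 1) * i + 0 + b - (k - 1) * i = b)%N by lia.
  have -> : (((k - 1) * i + 0 + b + i).+1 = k * i + (b + 1))%N by move: ki; generalize ((k-1)*i)%N (k*i)%N; intros; lia.
  have -> : (((k - 1) * i + 0 + b).+1 = k * i + (b + 1) - i)%N by move: ki; generalize ((k-1)*i)%N (k*i)%N; intros; lia.
  rewrite bin_sub ?addn1 //; move: ki; generalize ((k-1)*i)%N (k*i)%N; intros; lia.
- subst b.
  have -> : (((k - 1) * i + 0 + (k-1)) %/ (k - 1) = i.+1)%N.
    by rewrite addn0 -mulnSr mulnC mulnK //; lia.
  have -> : ((k - 1) * i + 0 + (k-1) - (k - 1) * i.+1 = 0)%N by rewrite mulnS; lia.
  set N := (k * i.+1)%N.
  have -> : (((k - 1) * i + 0 + (k-1) + i.+1).+1 = N.+1)%N by rewrite /N mulnS; move: ki; generalize ((k-1)*i)%N (k*i)%N; intros; lia.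
  have -> : (((k - 1) * i + 0 + (k-1)).+1 = N.+1 - i.+1)%N by rewrite /N mulnS; move: ki; generalize ((k-1)*i)%N (k*i)%N; intros; lia.
  have -> : (k * i + (k - 1 + 1) = N)%N by rewrite /N mulnS; move: ki; generalize ((k-1)*i)%N (k*i)%N; intros; lia.
  rewrite bin_sub; last by rewrite /N mulnS; move: ki; generalize ((k-1)*i)%N (k*i)%N; intros; lia.
  have B1 : ('C(N.+1, i.+1) * i.+1 = N.+1 * 'C(N, i))%N by rewrite mulnC -mul_bin_diag.
  have H1 : ('C(N.+1, i.+1))%:R = (N.+1)%:R * ('C(N, i))%:R / (i.+1)%:R :> rat.
    by rewrite -natrM -B1 natrM mulfK // pnatr_eq0.
  rewrite H1 subnK; last by lia.
  have NE : (N%:R : rat) = k%:R * (i%:R + 1) by rewrite /N natrM natS'.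
  have N1 : ((N.+1)%:R : rat) != 0 by rewrite pnatr_eq0.
  have J1 : ((i.+1)%:R : rat) != 0 by rewrite pnatr_eq0.
  have K0 : (k%:R : rat) != 0 by rewrite pnatr_eq0; lia.
  rewrite !natS' in N1 J1 *.
  move: N1; rewrite NE => N1.
  clearbody N. field. by rewrite N1 J1 K0.
Qed.

Definition sterm (k n i b s : nat) : rat :=
  (-1)^+s * ('C((s+b) %/ (k-1) + n, n - s))%:R * genCat ((k-1)*i + s + b) k.

Definition Sig (k n i b : nat) : rat := \sum_(0 <= s < n.+1) sterm k n i b s.

Lemma Sig_lo k n i b : (1 < k)%N -> (b < k - 1)%N ->
  Sig k n.+1 i b = Sig k n i b - Sig k n i b.+1.
Proof.
move=> k1 bk; rewrite /Sig big_nat_recr //=.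
pose g s := (-1)^+s * ('C((s+b) %/ (k-1) + n, n.+1 - s))%:R
            * genCat ((k-1)*i + s + b) k.
have E : \sum_(0 <= s < n.+1) sterm k n.+1 i b s
       = \sum_(0 <= s < n.+1) sterm k n i b s + \sum_(0 <= s < n.+1) g s.
  rewrite -big_split; apply: eq_big_nat => s /andP[_ hs] /=.
  rewrite /sterm /g subSn // addnS binS natrD; ring.
have E2 : sterm k n.+1 i b n.+1 = g n.+1 by rewrite /sterm /g !subnn !bin0.
rewrite E E2 -addrA -big_nat_recr // big_nat_recl //.
have -> : g 0%N = 0 by rewrite /g add0n divn_small // add0n bin_small ?mul0r ?mulr0.
rewrite /= add0r -sumrN; congr (_ + _); apply: eq_big_nat => s _.
rewrite /g /sterm subSS exprS mulN1r !mulNr.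
have -> : (s.+1 + b = s + b.+1)%N by lia.
by have -> : ((k-1)*i + s.+1 + b = (k-1)*i + s + b.+1)%N by lia.
Qed.

Lemma Sig_hi k n i : (1 < k)%N ->
  Sig k n.+1 i (k-1) = Sig k n.+1 i.+1 0 + Sig k n i (k-1).
Proof.
move=> k1; rewrite /Sig big_nat_recr // [X in _ = X + _]big_nat_recr //=.
have hd : forall s, ((s + (k-1)) %/ (k-1) = (s %/ (k-1)).+1)%N.
  by move=> s; rewrite divnDr ?dvdnn // divnn (_ : (0 < k-1)%N = true) ?addn1 //; apply/idP; lia.
have ha : forall s, ((k-1) * i + s + (k-1) = (k-1) * i.+1 + s + 0)%N.
  by move=> s; rewrite mulnS; lia.
have E2 : sterm k n.+1 i (k-1) n.+1 = sterm k n.+1 i.+1 0 n.+1.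
  by rewrite /sterm !subnn !bin0 ha.
rewrite E2 addrAC; congr (_ + _); rewrite -big_split; apply: eq_big_nat => s /andP[_ hs] /=.
rewrite /sterm hd ha addn0 subSn // addSn binS natrD.
have -> : ((s %/ (k - 1)).+1 + n = s %/ (k - 1) + n.+1)%N by lia.
rewrite addn0; ring.
Qed.

Lemma SigTg k n : (1 < k)%N -> forall i b, (b <= k - 1)%N -> Sig k n i b = Tg k n i b.
Proof.
move=> k1; elim: n => [|n IH] i b bk.
  rewrite /Sig big_nat1 /sterm /Tg /= !subn0 bin0 expr0 !mul1r.
  by rewrite genCat_base // muln0 add0n.
have lo : forall i b, (b < k - 1)%N -> Sig k n.+1 i b = Tg k n.+1 i b.
  move=> i' b' bl; rewrite Sig_lo // Tg_lo; last by lia.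
  by rewrite !IH //; lia.
case: (ltngtP b (k-1)) bk => // [bl|->] _; first exact: lo.
rewrite Sig_hi // Tg_hi; last by lia.
by rewrite lo ?IH //; lia.
Qed.

Lemma sum_delta (N p : nat) (f : nat -> rat) :
  \sum_(x < N) f x * (x == p :> nat)%:R = if (p < N)%N then f p else 0.
Proof.
elim: N => [|N IH]; first by rewrite big_ord0.
rewrite big_ord_recr /= IH.
case: (ltngtP p N) => [lt|gt|->].
- by rewrite mulr0 addr0 (ltn_trans lt (ltnSn N)).
- by rewrite mulr0 addr0 ltnNge gt.
- by rewrite mulr1 add0r ltnSn.
Qed.

Definition Gm (k b m : nat) : 'M[rat]_(m + 1) :=
  \matrix_(x, j) if (j < m)%N then ((x : nat) == j)%:R
                 else (-1)^+x * ('C((x + b) %/ (k-1) + m, m - x))%:R.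

Lemma detG k b m : \det (Gm k b m) = (-1)^+m.
Proof.
rewrite -det_tr det_trig; last first.
  apply/is_trig_mxP => i j lt; rewrite !mxE.
  have -> : (i < m)%N by have := ltn_ord j; lia.
  by rewrite gtn_eqF.
pose f (x : nat) : rat := if (x < m)%N then 1 else (-1)^+m.
rewrite (eq_bigr (fun x : 'I_(m+1) => f x)); last first.
  move=> x _; rewrite !mxE eqxx /f; case: ifP => // xm.
  have -> : (x : nat) = m by have := ltn_ord x; move: xm; lia.
  by rewrite subnn bin0 mulr1.
rewrite -(big_mkord xpredT f) addn1 big_nat_recr //= /f ltnn big1_seq ?mul1r //.
by move=> x /andP[_]; rewrite mem_index_iota => /andP[_ ->].
Qed.

Lemma Sig_ord k m i b :
  \sum_(x < m + 1) genCat ((k-1)*i + x + b) k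
     * ((-1)^+x * ('C((x + b) %/ (k-1) + m, m - x))%:R) = Sig k m i b.
Proof.
rewrite -(big_mkord xpredT (fun x => genCat ((k-1)*i + x + b) k
     * ((-1)^+x * ('C((x + b) %/ (k-1) + m, m - x))%:R))) /Sig addn1.
by apply: eq_bigr => x _; rewrite /sterm mulrC mulrA.
Qed.

Definition Fm (k b m : nat) : 'M[rat]_m :=
  \matrix_(i, j) genCat ((k-1) * i + j + b) k.

Lemma FG k b m : (1 < k)%N -> (b <= k - 1)%N ->
  Fm k b (m + 1) *m Gm k b m =
  block_mx (Fm k b m) 0 (\matrix_(i < 1, j < m) genCat ((k-1) * m + j + b) k)
           (\matrix_(i < 1, j < 1) (-1)^+m).
Proof.
move=> k1 bk.
apply/matrixP => i j; rewrite -[i]splitK -[j]splitK.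
case: (split i) => i'; case: (split j) => j' /=;
  rewrite ?block_mxEul ?block_mxEur ?block_mxEdl ?block_mxEdr !mxE.
- under eq_bigr => x _ do rewrite !mxE /= ltn_ord.
  rewrite (sum_delta _ _ (fun x => genCat ((k-1) * i' + x + b) k)).
  by rewrite (ltn_trans (ltn_ord j')) ?addn1.
- have -> : j' = ord0 by apply: ord1.
  under eq_bigr => x _ do rewrite !mxE /= addn0 ltnn.
  by rewrite Sig_ord SigTg // /Tg ltn_ord.
- under eq_bigr => x _ do rewrite !mxE /= ltn_ord.
  rewrite (sum_delta _ _ (fun x => genCat ((k-1) * (m + i') + x + b) k)).
  rewrite (ltn_trans (ltn_ord j')) ?addn1 //.
  by rewrite (ord1 i') /= addn0.
- have -> : j' = ord0 by apply: ord1.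
  have -> : i' = ord0 by apply: ord1.
  under eq_bigr => x _ do rewrite !mxE /= addn0 ltnn.
  rewrite Sig_ord SigTg // /Tg /= ltnn subnn Rf0 ?mulr1 //; lia.
Qed.

Lemma detF k b m : (1 < k)%N -> (b <= k - 1)%N -> \det (Fm k b m) = 1.
Proof.
move=> k1 bk; elim: m => [|m IH]; first by rewrite det_mx00.
rewrite -addn1.
have := congr1 determinant (@FG k b m k1 bk).
rewrite det_mulmx detG det_lblock IH det_mx11 mxE mul1r => /eqP.
move=> /eqP h; have s0 : ((-1)^+m : rat) != 0 by rewrite signr_eq0.
by apply: (mulIf s0); rewrite h mul1r.
Qed.

Definition Ym (k b n : nat) : 'M[rat]_(n + 1) :=
  \matrix_(i, x) if (i < n)%N then genCat ((k-1) * i + x + b) k else (-1)^+x.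

Definition Vm (n : nat) : 'M[rat]_(n + 1) :=
  \matrix_(x, j) (((x : nat) == j) || ((x : nat) == j.+1))%:R.

Lemma detV n : \det (Vm n) = 1.
Proof.
rewrite det_trig; last first.
  apply/is_trig_mxP => i j lt; rewrite !mxE.
  by rewrite (ltn_eqF lt) (ltn_eqF (ltn_trans lt (ltnSn j))).
by apply: big1 => i _; rewrite !mxE eqxx.
Qed.

Lemma sumV n (f : nat -> rat) (j : nat) :
  \sum_(x < n + 1) f x * (((x : nat) == j) || ((x : nat) == j.+1))%:R
  = (if (j < n + 1)%N then f j else 0) + (if (j.+1 < n + 1)%N then f j.+1 else 0).
Proof.
rewrite -!sum_delta -big_split; apply: eq_bigr => x _ /=.
rewrite -mulrDr; congr (_ * _).
case: (eqVneq (x : nat) j) => [->|ne] /=; first by rewrite (ltn_eqF (ltnSn j)) addr0.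
by rewrite add0r.
Qed.

Lemma YV k b n :
  Ym k b n *m Vm n =
  block_mx (\matrix_(i < n, j < n)
          (genCat ((k - 1) * i + j + b)%N k
           + genCat ((k - 1) * i + j + b + 1)%N k))
     (\matrix_(i < n, j < 1) genCat ((k-1) * i + n + b) k) 0
     (\matrix_(i < 1, j < 1) (-1)^+n).
Proof.
apply/matrixP => i j; rewrite -[i]splitK -[j]splitK.
case: (split i) => i'; case: (split j) => j' /=;
  rewrite ?block_mxEul ?block_mxEur ?block_mxEdl ?block_mxEdr !mxE.
- under eq_bigr => x _ do rewrite !mxE /= ltn_ord.
  rewrite (sumV _ (fun x => genCat ((k-1) * i' + x + b) k)) /=.
  rewrite !addn1 !ltnS ltn_ord (ltnW (ltn_ord j')).
  by congr (_ + genCat _ _); lia.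
- under eq_bigr => x _ do rewrite !mxE /= ltn_ord.
  rewrite (sumV _ (fun x => genCat ((k-1) * i' + x + b) k)) (ord1 j') /=.
  by rewrite addn0 addn1 ltnSn ltnn addr0.
  rewrite (ord1 i'); under eq_bigr => x _ do rewrite !mxE /= addn0 ltnn.
  rewrite (sumV _ (fun x => (-1)^+x)) /= !addn1 !ltnS ltn_ord (ltnW (ltn_ord j')).
  by rewrite exprS mulN1r addrN.
- rewrite (ord1 i'); under eq_bigr => x _ do rewrite !mxE /= addn0 ltnn.
  rewrite (sumV _ (fun x => (-1)^+x)) (ord1 j') /=.
  by rewrite addn0 addn1 ltnSn ltnn addr0.
Qed.

Lemma YG k b n : (1 < k)%N -> (b <= k - 1)%N ->
  Ym k b n *m Gm k b n =
  block_mx (Fm k b n) 0 (\matrix_(i < 1, j < n) (-1)^+j)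
     (\matrix_(i < 1, j < 1)
        (\sum_(0 <= s < n.+1) 'C(((s + b) %/ (k - 1)) + n, n - s))%:R).
Proof.
move=> k1 bk.
apply/matrixP => i j; rewrite -[i]splitK -[j]splitK.
case: (split i) => i'; case: (split j) => j' /=;
  rewrite ?block_mxEul ?block_mxEur ?block_mxEdl ?block_mxEdr !mxE.
- under eq_bigr => x _ do rewrite !mxE /= !ltn_ord.
  rewrite (sum_delta _ _ (fun x => genCat ((k-1) * i' + x + b) k)).
  by rewrite (ltn_trans (ltn_ord j')) ?addn1.
- rewrite (ord1 j'); under eq_bigr => x _ do rewrite !mxE /= addn0 ltnn ltn_ord.
  by rewrite Sig_ord SigTg // /Tg ltn_ord.
- rewrite (ord1 i'); under eq_bigr => x _ do rewrite !mxE /= addn0 ltnn ltn_ord.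
  rewrite (sum_delta _ _ (fun x => (-1)^+x)).
  by rewrite (ltn_trans (ltn_ord j')) ?addn1.
- rewrite (ord1 i') (ord1 j'); set RR := (X in _ = X); under eq_bigr => x _ do rewrite !mxE /= addn0 ltnn.
  rewrite /RR.
  have ss : forall x, ((-1)^+x * (-1)^+x : rat) = 1.
    by move=> x; rewrite -exprMn mulrNN mulr1 expr1n.
  under eq_bigr => x _ do rewrite mulrA ss mul1r.
  rewrite natr_sum -(big_mkord xpredT (fun x => ('C((x + b) %/ (k - 1) + n, n - x))%:R)).
  by rewrite addn1.
Qed.

Theorem theorem9 (n k beta : nat) (hn : (0 < n)%N) (hk : (2 <= k)%N)
  (hbeta : (beta <= k - 1)%N) :
  \det (\matrix_(i < n, j < n)
          (genCat ((k - 1) * i + j + beta)%N k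
           + genCat ((k - 1) * i + j + beta + 1)%N k))
  = (\sum_(0 <= s < n.+1)
       'C(((s + beta) %/ (k - 1)) + n, n - s))%:R.
Proof.
have h1 := congr1 determinant (YV k beta n).
have h2 := congr1 determinant (@YG k beta n hk hbeta).
rewrite det_mulmx detV mulr1 det_ublock det_mx11 mxE in h1.
rewrite det_mulmx detG det_lblock det_mx11 mxE detF // mul1r h1 in h2.
rewrite -h2 -mulrA -exprMn mulrNN mulr1 expr1n mulr1.
by [].
Qed.
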